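(* Let $a \ge 2$ be even and $b \ge 2$ be an integer such that $a \equiv 2 \pmod 4$ or $b$ is even. Then $R_\mathrm{cyc}(M_a^\mathrm{nest}, S_b) \ge a + b - 2$, where $S_b$ is any star graph of order $b$.
   Context: All graphs are finite, simple and undirected, and a graph of order $n$ has vertex set $\{0,1,\ldots,n-1\}$; $K_n$ is the complete graph on $\{0,\ldots,n-1\}$. A $2$-edge-coloring of $K_n$ assigns each edge a color in $\{1,2\}$. For a graph $H$ and such a coloring, an embedding of $H$ in color $j$ is an injective map $\varphi\colon V(H)\to V(K_n)$ such that for every edge $uv$ of $H$ the edge $\{\varphi(u),\varphi(v)\}$ has color $j$; it is increasing up to a cyclic permutation if there exists $t\in V(H)$ such that $(\varphi(t),\ldots,\varphi(|H|-1),\varphi(0),\ldots,\varphi(t-1))$ is increasing. The cyclic Ramsey number $R_\mathrm{cyc}(H_1,H_2)$ is the smallest $n$ such that every $2$-edge-coloring of $K_n$ admits an embedding of $H_1$ in color $1$ or of $H_2$ in color $2$ that is increasing up to a cyclic permutation. For even $n\ge2$, the nested matching $M_n^\mathrm{nest}$ is the graph of order $n$ whose edges are $\{v,n-1-v\}$ for $0\le v\le n/2-1$. A star graph of order $n$ is a graph on $\{0,\ldots,n-1\}$ in which one vertex (the center, arbitrary) is adjacent to all others and there are no other edges. *)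

(* Defs.v *)
From mathcomp Require Import all_boot.
Unset Printing Implicit Defensive.

(* A graph of order m: vertex set 'I_m = {0,...,m-1}, edges given by a
   relation (only used for symmetric irreflexive relations below). *)
Definition graph (m : nat) := rel 'I_m.

Definition nested_matching (m : nat) : graph m :=
  fun u v => (u + v == m.-1) && (u != v).

Definition star_graph (m : nat) (c : 'I_m) : graph m :=
  fun u v => ((u == c) && (v != c)) || ((v == c) && (u != c)).

Definition two_coloring (n : nat) (col : 'I_n -> 'I_n -> nat) : Prop :=
  forall i j : 'I_n, i != j -> col i j = col j i /\ (col i j = 1 \/ col i j = 2).

Definition embedding_in_color (m n : nat) (H : graph m) (col : 'I_n -> 'I_n -> nat)
  (j : nat) (phi : 'I_m -> 'I_n) : Prop :=
  injective phi /\ forall u v : 'I_m, H u v -> col (phi u) (phi v) = j.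

(* phi is increasing up to a cyclic permutation: for some t, the sequence
   phi t, ..., phi (m-1), phi 0, ..., phi (t-1) is (strictly) increasing.
   The position of i in that sequence is (i + m - t) mod m. *)
Definition cyc_increasing (m n : nat) (phi : 'I_m -> 'I_n) : Prop :=
  exists t : 'I_m, forall i k : 'I_m,
    (i + m - t) %% m < (k + m - t) %% m -> phi i < phi k.

Definition cyc_ramsey_prop (m1 m2 : nat) (H1 : graph m1) (H2 : graph m2) (n : nat) : Prop :=
  forall col : 'I_n -> 'I_n -> nat, two_coloring n col ->
    (exists phi : 'I_m1 -> 'I_n, embedding_in_color m1 n H1 col 1 phi /\ cyc_increasing _ n phi)
    \/ (exists phi : 'I_m2 -> 'I_n, embedding_in_color m2 n H2 col 2 phi /\ cyc_increasing _ n phi).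

(* Main.v *)
Require Import Defs.
From mathcomp Require Import all_boot zify.
Lemma mono m1 m2 H1 H2 n : cyc_ramsey_prop m1 m2 H1 H2 n -> cyc_ramsey_prop m1 m2 H1 H2 n.+1.
Proof.
move=> P col Hc.
pose w := widen_ord (leqnSn n).
have winj : injective w by move=> x y h; apply: val_inj; exact: (congr1 val h).
have Hc' : two_coloring n (fun i j => col (w i) (w j)).
  move=> i j ij; apply: Hc. apply: contra ij => /eqP/winj ->. by [].
case: (P _ Hc') => [[phi [[inj E] [t cyc]]]|[phi [[inj E] [t cyc]]]].
- left; exists (w \o phi); split; [split|].
  + by move=> x y /winj /inj.
  + exact: E.
  + by exists t => i k /cyc.
- right; exists (w \o phi); split; [split|].
  + by move=> x y /winj /inj.
  + exact: E.
  + by exists t => i k /cyc.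
Qed.
Lemma mono_le m1 m2 H1 H2 n N : n <= N -> cyc_ramsey_prop m1 m2 H1 H2 n -> cyc_ramsey_prop m1 m2 H1 H2 N.
Proof.
elim: N => [|N IH]; first by rewrite leqn0 => /eqP ->.
rewrite leq_eqVlt => /orP[/eqP -> //|]; rewrite ltnS => h P.
exact: mono (IH h P).
Qed.

Definition cond (N k d : nat) : bool := (d <= k) || (N - d <= k) || (d * 2 == N).
Definition dist (N i j : nat) : nat := if i < j then j - i else N - (i - j).
Definition col0 N k (i j : 'I_N) : nat :=
  if i == j then 1 else if cond N k (dist N i j) then 2 else 1.

Lemma col0_two N k : two_coloring N (col0 N k).
Proof.
move=> i j ij; split; last by rewrite /col0; case: (_ == _); [left|case: cond; [right|left]].
rewrite /col0 (negbTE ij) eq_sym (negbTE ij).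
have hi := ltn_ord i; have hj := ltn_ord j.
have ij' : (i : nat) != j by [].
congr (if _ then _ else _).
rewrite /cond /dist.
have key : forall d, 0 < d < N -> 
  ((d <= k) || (N - d <= k) || (d * 2 == N)) =
  ((N - d <= k) || (N - (N - d) <= k) || ((N - d) * 2 == N)).
  move=> d /andP[d0 dN].
  have -> : N - (N - d) = d by lia.
  have -> : ((N - d) * 2 == N) = (d * 2 == N) by apply/eqP/eqP; lia.
  by rewrite (orbC (d <= k)).
case: (ltngtP i j) => h; last by move: ij'; rewrite h eqxx.
- rewrite key //; lia.
- rewrite [RHS]key //; lia.
Qed.

Lemma dist_inj N x y y' : x < N -> y < N -> y' < N -> x != y -> x != y' ->
  dist N x y = dist N x y' -> y = y'.
Proof.
move=> xN yN yN' xy xy'; rewrite /dist.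
case: (ltnP x y) => h1; case: (ltnP x y') => h2; lia.
Qed.

Lemma dist_range N x y : x < N -> y < N -> x != y -> 0 < dist N x y < N.
Proof.
move=> xN yN xy; rewrite /dist.
case: (ltnP x y) => h1; lia.
Qed.

Lemma no_star b N k (c : 'I_b) : 2 * k + 1 <= N ->
  (b = 2 * k + 2 /\ odd N) \/ b = 2 * k + 3 ->
  ~ exists phi, embedding_in_color b N (star_graph b c) (col0 N k) 2 phi.
Proof.
move=> kN hb [phi [inj E]].
set x := phi c.
have H : forall v, v != c -> cond N k (dist N x (phi v)) /\ x != phi v.
  move=> v vc.
  have := E c v. rewrite /star_graph eqxx vc /= => /(_ isT).
  rewrite /col0 -/x. case: eqP => // hx. by case: cond.
pose code d := if d <= k then d - 1 else if N - d <= k then k + (N - d) - 1 else 2 * k.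
pose h v := code (dist N x (phi v)).
have hlt : forall v, v != c -> h v < b - 2.
  move=> v vc; have [C X] := H v vc.
  have := @dist_range N x _ (ltn_ord x) (ltn_ord (phi v)) X.
  move: C; rewrite /h /code /cond.
  set d := dist N x (phi v).
  case: (leqP d k) => h1 /=; first by lia.
  case: (leqP (N - d) k) => h2 /=; first by lia.
  move/eqP => h3.
  case: hb => [[hb oN]|hb]; last by lia.
  by move: oN; rewrite -h3 muln2 odd_double.
have hinj : {in predC1 c &, injective h}.
  move=> v w; rewrite !inE => vc wc.
  have [C1 X1] := H v vc; have [C2 X2] := H w wc.
  have R1 := @dist_range N x _ (ltn_ord x) (ltn_ord (phi v)) X1.
  have R2 := @dist_range N x _ (ltn_ord x) (ltn_ord (phi w)) X2.
  move=> hvw. apply: inj. apply: val_inj.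
  apply: (@dist_inj N x _ _ (ltn_ord x) (ltn_ord _) (ltn_ord _) X1 X2).
  move: hvw C1 C2 R1 R2; rewrite /h /code /cond.
  set d1 := dist N x (phi v); set d2 := dist N x (phi w).
  case: (leqP d1 k) => a1; case: (leqP d2 k) => a2 /=; 
  case: (leqP (N - d1) k) => b1; case: (leqP (N - d2) k) => b2 /=; 
  move=> e; rewrite ?orbT //= => /eqP c1 /eqP c2; lia.
have := uniq_leq_size (s1 := map h (enum (predC1 c))) (s2 := iota 0 (b - 2)).
rewrite size_map size_iota -cardE cardC1 card_ord.
move=> /(_ _ _) hh.
have : b.-1 <= b - 2.
  apply: hh.
  - rewrite map_inj_in_uniq ?enum_uniq //.
    by move=> v w; rewrite !mem_enum; exact: hinj.
  - move=> y /mapP [v]; rewrite mem_enum inE => vc ->.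
    rewrite mem_iota /=. exact: hlt.
lia.
Qed.
Lemma chord (a t j j' : nat) : 0 < a -> ~~ odd a ->
  (j + j') %% a = a - (2*t+1) %% a -> (t+j)%%a + (t+j')%%a = a - 1.
Proof.
move=> a0 ev H.
have s0 : (2*t+1) %% a != 0.
  apply/negP => /eqP E.
  have := odd_mod (2*t+1) (negbTE ev). rewrite E /=.
  have -> : odd (2*t+1) = true by rewrite addn1 /= mul2n odd_double.
  by [].
have sl : (2*t+1) %% a < a by rewrite ltn_mod.
have z0 : ((t+j)%%a + (t+j')%%a + 1) %% a = 0.
  have e1 : ((t+j)%%a + (t+j')%%a) %% a = (t+j+(t+j'))%%a by rewrite modnDm.
  rewrite -modnDml e1 modnDml.
  have -> : t + j + (t + j') + 1 = (2*t+1) + (j + j') by lia.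
  rewrite -modnDm H.
  have -> : (2 * t + 1) %% a + (a - (2 * t + 1) %% a) = a by lia.
  by rewrite modnn.
have l1 : (t+j)%%a < a by rewrite ltn_mod.
have l2 : (t+j')%%a < a by rewrite ltn_mod.
move: z0; set z := _ + 1 => z0.
have := divn_eq z a. rewrite z0 addn0.
set q := z %/ a.
case: q => [|[|q]] /=; first by lia.
  by lia.
move=> E. have : 2 * a <= q.+2 * a by rewrite leq_mul2r; apply/orP; right. lia.
Qed.

Lemma posK (a t j : nat) : t < a -> j < a -> ((t+j)%%a + a - t) %% a = j.
Proof.
move=> ta ja.
case: (ltnP (t+j) a) => h.
  rewrite (modn_small h) (_ : t + j + a - t = j + a) ?modnDr ?modn_small //; lia.
have -> : (t+j) %% a = (t+j) - a.
  rewrite -{1}(subnK h) modnDr modn_small //; lia.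
rewrite (_ : t + j - a + a - t = j) ?modn_small //; lia.
Qed.
Lemma span (a : nat) (f : nat -> nat) :
  (forall j, j.+1 < a -> f j < f j.+1) ->
  forall x y, x <= y -> y < a -> f x + (y - x) <= f y.
Proof.
move=> finc x; elim=> [|y IH] xy ya.
  have -> : x = 0 by lia. by rewrite addn0.
case: (ltnP x y.+1) => h.
  have := IH (ltnSE h) (ltnW ya). have := finc y ya. lia.
have -> : x = y.+1 by lia. by rewrite subnn addn0.
Qed.

Ltac clf f := repeat match goal with H : context[f] |- _ => clear H end.
Ltac ilia := match goal with f : nat -> nat |- _ => clf f; lia end.

Lemma core (a m k N j0 : nat) (f : nat -> nat) :
  a = m * 2 -> 0 < m -> j0 < m ->
  (forall j, j.+1 < a -> f j < f j.+1) ->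
  f (a-1) < N ->
  (forall j j', j < j' -> j' < a -> (j + j') %% a = 2*j0+1 -> cond N k (f j' - f j) = false) ->
  N = a + 2*k - 1 \/ (odd m /\ N = a + 2*k) -> False.
Proof.
move=> ea m0 jm finc fN good HN.
have sp := @span a f finc.
have sp2 : forall x z y, x <= z -> z.+1 <= y -> y < a -> f z + k.+1 <= f z.+1 ->
    f x + (y - x) + k <= f y.
  move=> x z y h1 h2 h3 h4.
  have := sp x z h1 (leq_ltn_trans (ltnW h2) h3).
  have := sp z.+1 y h2 h3. lia.
have cnd : forall j j', j < j' -> j' < a -> (j + j') %% a = 2*j0+1 ->
    [/\ k < f j' - f j, k < N - (f j' - f j) & (f j' - f j) * 2 != N].
  move=> j j' h1 h2 h3. have := good j j' h1 h2 h3. rewrite /cond.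
  case: (leqP (f j' - f j) k) => //= ?.
  case: (leqP (N - (f j' - f j)) k) => //= ?.
  by case: eqP.
have E1 : f j0 + k.+1 <= f j0.+1.
  have [h _ _] := cnd j0 j0.+1 (ltnSn _) ltac:(ilia) ltac:(rewrite modn_small; lia).
  have := finc j0 ltac:(ilia). lia.
set i := (m - 1) %/ 2.
have i2 : i * 2 <= m - 1 by rewrite /i; lia.
have i3 : m - 1 <= i * 2 + 1 by rewrite /i; lia.
have oddm : N = a + 2 * k - 1 \/ odd m /\ N = a + 2 * k -> m = i * 2 + 1 \/ N = a + 2 * k - 1.
  case: HN => [?|[om _]]; [by right| left].
  have h := odd_double_half m. rewrite om -muln2 in h. rewrite /i. lia.
clearbody i.
have fin : forall lo hi, lo < hi -> hi < a ->
   (hi - lo + k <= f hi - f lo) -> (f hi - f lo + a + k <= N + (hi - lo)) ->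
   (hi - lo = m \/ N = a + 2 * k - 1) -> (lo + hi) %% a = 2 * j0 + 1 -> False.
  move=> lo hi h1 h2 h3 h3' h4 h5.
  have [_ _ h6] := cnd lo hi h1 h2 h5.
  move: h6; case: HN => [HN|[om HN]]; first by lia.
  case: h4 => h4; last by lia.
  move/eqP; apply. lia.
case: (ltnP (j0 + m).+1 a) => wrap.
- (* non-wrap: end chord 2 at j1 = j0+m *)
  have E2 : f (j0 + m) + k.+1 <= f (j0+m).+1.
    have [h _ _] := cnd (j0+m) (j0+m).+1 (ltnSn _) wrap ltac:(
      rewrite (_ : j0 + m + (j0 + m).+1 = (2*j0+1) + a); last lia;
      rewrite modnDr modn_small; lia).
    have := finc (j0 + m) wrap. lia.
  case: (leqP i j0) => ij.
  + have A := sp2 (j0 - i) j0 (j0+1+i) ltac:(ilia) ltac:(ilia) ltac:(ilia) E1.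
    have B := sp2 (j0+1+i) (j0+m) (a-1) ltac:(ilia) ltac:(ilia) ltac:(ilia) E2.
    have C := sp 0 (j0 - i) ltac:(ilia) ltac:(ilia).
    apply: (fin (j0 - i) (j0 + 1 + i)); [ilia|ilia|clear HN oddm; lia|clear HN oddm; lia| |].
    * case: (oddm HN) => hh; [left|right]; clear -hh ij; lia.
    * rewrite modn_small; clear -ij jm ea i2 m0; lia.
  + have A := sp2 (j0 + 1 + i) (j0+m) (j0 + a - i) ltac:(ilia) ltac:(ilia) ltac:(ilia) E2.
    have B := sp2 0 j0 (j0+1+i) ltac:(ilia) ltac:(ilia) ltac:(ilia) E1.
    have C := sp (j0 + a - i) (a - 1) ltac:(ilia) ltac:(ilia).
    apply: (fin (j0 + 1 + i) (j0 + a - i)); [ilia|ilia|clear HN oddm; lia|clear HN oddm; lia| |].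
    * case: (oddm HN) => hh; [left|right]; clear -hh ij i2 ea; lia.
    * rewrite (_ : j0 + 1 + i + (j0 + a - i) = (2*j0+1) + a); last by clear -ij jm ea i2 m0; lia.
      rewrite modnDr modn_small; clear -ij jm ea i2 m0; lia.
-
  have j0e : j0 = m - 1 by lia.
  have E2 : k < N - (f (a-1) - f 0).
    have [_ h _] := cnd 0 (a-1) ltac:(ilia) ltac:(ilia) ltac:(rewrite modn_small; lia).
    exact: h.
  have F0 := sp 0 (a-1) (leq0n _) ltac:(ilia).
  have {}E2 : f (a-1) + k.+1 <= N + f 0 by lia.
  have A := sp2 (j0 - i) j0 (j0+1+i) ltac:(ilia) ltac:(ilia) ltac:(ilia) E1.
  have B := sp (j0+1+i) (a-1) ltac:(ilia) ltac:(ilia).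
  have C := sp 0 (j0 - i) ltac:(ilia) ltac:(ilia).
  apply: (fin (j0 - i) (j0 + 1 + i)); [ilia|ilia|clear HN oddm; lia|clear HN oddm; lia| |].
  + case: (oddm HN) => hh; [left|right]; clear -hh i2 ea j0e m0; lia.
  + rewrite modn_small; clear -j0e jm ea i2 m0; lia.
Qed.

Lemma no_match a m N k : a = m * 2 -> 0 < m -> (N = a + 2*k - 1 \/ (odd m /\ N = a + 2*k)) ->
  ~ exists phi, embedding_in_color a N (nested_matching a) (col0 N k) 1 phi /\ cyc_increasing a N phi.
Proof.
move=> ea m0 HN [phi [[inj E] [t cyc]]].
have a0 : 0 < a by lia.
have aev : ~~ odd a by rewrite ea muln2 odd_double.
pose f j := val (phi (insubd t ((t + j) %% a))).
have vK : forall j, val (insubd t ((t + j) %% a)) = (t + j) %% a.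
  by move=> j; rewrite insubdK // unfold_in /= ltn_mod.
have finc : forall j, j.+1 < a -> f j < f j.+1.
  move=> j ja; apply: cyc.
  rewrite !vK !posK //; lia.
have fN : f (a - 1) < N by exact: ltn_ord.
set s := (2 * t + 1) %% a.
have sa : s < a by rewrite ltn_mod.
have os : odd s by rewrite /s odd_mod ?(negbTE aev) // addn1 /= mul2n odd_double.
set r := a - s.
have orr : odd r by rewrite /r oddB ?(ltnW sa) // os (negbTE aev).
set j0 := r./2.
have rj : r = j0 * 2 + 1.
  have := odd_double_half r. rewrite orr -muln2 /j0. lia.
apply: (@core a m k N j0 f ea m0 _ finc fN _ HN).
  have : 0 < s by move: os; case: (s).
  rewrite /r in rj; lia.
move=> j j' jj ja hr.
have hch := @chord a t j j' a0 aev ltac:(rewrite hr /r -/s; lia).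
set u := insubd t ((t + j) %% a); set v := insubd t ((t + j') %% a).
have uv : val u + val v = a - 1 by rewrite !vK.
have une : u != v.
  apply/negP => /eqP ee; move: uv; rewrite ee; lia.
have Euv := E u v.
have : nested_matching a u v by rewrite /nested_matching une andbT; apply/eqP; rewrite -subn1; exact: uv.
move=> /Euv; rewrite /col0.
have pne : phi u != phi v by apply: contra une => /eqP /inj ->.
rewrite (negbTE pne).
have sp := @span a f finc j j' (ltnW jj) ja.
have fl : f j < f j' by lia.
have -> : dist N (phi u) (phi v) = f j' - f j by rewrite /dist fl.
by case: cond.
Qed.

Theorem proposition4p35 (a b : nat) (c : 'I_b) :
  2 <= a -> ~~ odd a -> 2 <= b -> (a %% 4 = 2 \/ ~~ odd b) ->
  forall n : nat, cyc_ramsey_prop a b (nested_matching a) (star_graph b c) n ->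
    a + b - 2 <= n.
Proof.
move=> a2 aev b2 hc n Hn.
rewrite leqNgt; apply/negP => lt.
have HN := @mono_le _ _ _ _ n (a + b - 3) ltac:(lia) Hn.
set m := a./2.
have ea : a = m * 2 by have := odd_double_half a; rewrite (negbTE aev) -muln2 /m; lia.
set k := b./2 - 1.
have hb := odd_double_half b. rewrite -muln2 in hb.
have kN : 2 * k + 1 <= a + b - 3 by rewrite /k; lia.
case: (HN (col0 (a + b - 3) k) (col0_two _ _)).
- apply: (@no_match a m (a + b - 3) k ea ltac:(lia)).
  case: (boolP (odd b)) => ob.
  + right; split.
    * case: hc => [h|]; last by rewrite ob.
      have : m %% 2 = 1 by rewrite /m; lia. by rewrite modn2; case: (odd m).
    * rewrite ob in hb; rewrite /k; lia.
  + left. rewrite (negbTE ob) in hb; rewrite /k; lia.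
- move=> [phi [emb _]]; apply: (@no_star b (a + b - 3) k c kN); last by exists phi.
  case: (boolP (odd b)) => ob.
  + right. rewrite ob in hb; rewrite /k; lia.
  + left. rewrite (negbTE ob) in hb. split; first by rewrite /k; lia.
    have -> : a + b - 3 = (m + b./2 - 2) * 2 + 1 by lia.
    by rewrite addn1 /= muln2 odd_double.
Qed.
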